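(* Let $U$ be a Hilbert space, $H: U \rightrightarrows U$ with $H^{-1}(0)\ne\emptyset$, and for each $i\in\mathbb{N}$ let $V'_{i+1}: U \to U$ and $M_{i+1}, W_{i+1}, Z_{i+1}, \Xi_{i+1} \in \mathcal{L}(U;U)$ with $Z_{i+1}M_{i+1}$ self-adjoint and $Z_{i+1}M_{i+1} \ge 0$. Let $(u^i)_{i\in\mathbb{N}}\subset U$ satisfy \[ 0 \in W_{i+1}H(u^{i+1}) + V'_{i+1}(u^{i+1}) + M_{i+1}(u^{i+1}-u^i) \quad (i\in\mathbb{N}). \] Let $\hat u \in H^{-1}(0)$ and suppose that for every $i$, $H$ is $(Z_{i+1}\Xi_{i+1}, 2Z_{i+1}W_{i+1}, Z_{i+2}M_{i+2})$-partially strongly submonotone at $(\hat u, 0)$, with a neighbourhood $\mathcal{U}$ of $\hat u$ (common to all $i$). Suppose also that for every $i\in\mathbb{N}$ there is $\Delta_{i+1}\in\mathbb{R}$ such that for all $u^* \in H^{-1}(0)$, \[ \tfrac12\|u^{i+1}-u^i\|^2_{Z_{i+1}M_{i+1}} + \tfrac12\|u^{i+1}-u^*\|^2_{Z_{i+1}(M_{i+1}+\Xi_{i+1})-Z_{i+2}M_{i+2}} + \langle V'_{i+1}(u^{i+1}), u^{i+1}-u^*\rangle_{Z_{i+1}} \ge -\Delta_{i+1}. \] Then for every $N\ge1$ with $\{u^0,\dots,u^N\}\subset\mathcal{U}$, \[ \tfrac12 \operatorname{dist}^2_{Z_{N+1}M_{N+1}}(u^N, H^{-1}(0)) \le \tfrac12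 \operatorname{dist}^2_{Z_1M_1}(u^0, H^{-1}(0)) + \sum_{i=0}^{N-1}\Delta_{i+1}. \]
   Context: For $T\in\mathcal{L}(U;U)$: $\langle x,z\rangle_T:=\langle Tx,z\rangle$, $\|x\|_T^2:=\langle Tx,x\rangle$, $\operatorname{dist}_T^2(z,A):=\inf_{u\in A}\|z-u\|_T^2$; $T\ge S$ means $T-S$ is positive semidefinite. For $T: U\rightrightarrows U$, $T^{-1}(w):=\{u : w\in T(u)\}$. Definition (partial strong submonotonicity): for $\Xi,N,M\in\mathcal{L}(U;U)$ with $M\ge0$, $T:U\rightrightarrows U$ is $(\Xi,N,M)$-partially strongly submonotone at $(\hat u,\hat w)\in\operatorname{graph}T$ if there is a neighbourhood $\mathcal{U}\ni\hat u$ such that \[ \inf_{u^*\in T^{-1}(\hat w)}\big(\langle w-\hat w, u-u^*\rangle_N + \|u-u^*\|^2_{M-\Xi}\big) \ge \operatorname{dist}^2_M(u, T^{-1}(\hat w)) \quad (u\in\mathcal{U},\ w\in T(u)). \] *)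

(* Defs.v *)
From HB Require Import structures.
From mathcomp Require Import all_boot all_order all_algebra.
From mathcomp Require Import all_classical all_reals all_analysis.
Set Implicit Arguments. Unset Strict Implicit. Unset Printing Implicit Defensive.
Import Order.TTheory GRing.Theory Num.Theory.
Import numFieldNormedType.Exports.
Local Open Scope classical_set_scope.
Local Open Scope ring_scope.

Section Defs.
Context {R : realType} {U : completeNormedModType R}.

(* ip is a (real) inner product inducing the norm of U; together with the
   completeness of U this makes (U, ip) a real Hilbert space. *)
Definition is_inner_product (ip : U -> U -> R) : Prop :=
  [/\ (forall x y, ip x y = ip y x),
      (forall x y z, ip (x + y) z = ip x z + ip y z),
      (forall (a : R) x y, ip (a *: x) y = a * ip x y)
    & (forall x, ip x x = `|x| ^+ 2)].

Definition bounded_linear (T : U -> U) : Prop :=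
  linear T /\ continuous T.

Definition ipT (ip : U -> U -> R) (T : U -> U) (x z : U) : R := ip (T x) z.

Definition sqnormT (ip : U -> U -> R) (T : U -> U) (x : U) : R := ip (T x) x.

Definition sqdistT (ip : U -> U -> R) (T : U -> U) (z : U) (A : set U) : \bar R :=
  ereal_inf [set (sqnormT ip T (z - u))%:E | u in A].

Definition op_ge (ip : U -> U -> R) (T S : U -> U) : Prop :=
  forall x, 0 <= ip (T x - S x) x.

Definition self_adjoint (ip : U -> U -> R) (T : U -> U) : Prop :=
  forall x y, ip (T x) y = ip x (T y).

Definition inv_set (T : U -> set U) (w : U) : set U := [set u | T u w].

Definition psub_at (ip : U -> U -> R) (T : U -> set U) (Xi N M : U -> U)
    (uh wh : U) (Uset : set U) : Prop :=
  [/\ op_ge ip M (fun _ => 0), T uh wh, nbhs uh Uset &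
  forall u w, Uset u -> T u w ->
    (sqdistT ip M u (inv_set T wh) <=
     ereal_inf [set (ipT ip N (w - wh) (u - us)
                     + sqnormT ip (fun x => M x - Xi x) (u - us))%:E
               | us in inv_set T wh])%E].

Definition partially_strongly_submonotone (ip : U -> U -> R) (T : U -> set U)
    (Xi N M : U -> U) (uh wh : U) : Prop :=
  exists Uset : set U, psub_at ip T Xi N M uh wh Uset.

End Defs.

(* Main.v *)
Require Import Defs.
From HB Require Import structures.
From mathcomp Require Import all_boot all_order all_algebra.
From mathcomp Require Import all_classical all_reals all_analysis.
Import Order.TTheory GRing.Theory Num.Theory.
Import numFieldNormedType.Exports.
Local Open Scope classical_set_scope.
Local Open Scope ring_scope.

From mathcomp Require Import lra.

Lemma inf_step (R : realType) (T : Type) (a : \bar R) (c : R) (A : set T) (g : T -> R) :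
  (forall t, A t -> (a <= (g t + c)%:E)%E) ->
  (a <= ereal_inf [set (g t)%:E | t in A] + c%:E)%E.
Proof.
move=> hA.
have h : (a - c%:E <= ereal_inf [set (g t)%:E | t in A])%E.
  apply: le_ereal_inf_tmp => _ [t At <-].
  case: a hA => [x||] hA.
  - have := hA t At. rewrite !lee_fin. lra.
  - by have := hA t At.
  - by rewrite leNye.
move: h; case: a {hA} => [x||]; case: (ereal_inf _) => [r||] //=.
- rewrite -!EFinD !lee_fin; lra.
- by move=> _; rewrite addye // leey.
- by move=> _; rewrite leNye.
Qed.

Section Helpers.
Context {R : realType} {U : completeNormedModType R}.

Lemma lin0 (f : U -> U) : linear f -> f 0 = 0.
Proof.
move=> hf; have := hf 1 0 0; rewrite !scale1r addr0 => h.
by apply: (addIr (f 0)); rewrite add0r -h.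
Qed.

Lemma linD (f : U -> U) : linear f -> forall x y, f (x + y) = f x + f y.
Proof. by move=> hf x y; have := hf 1 x y; rewrite !scale1r. Qed.

Lemma linN (f : U -> U) : linear f -> forall x, f (- x) = - f x.
Proof.
move=> hf x; have := hf (-1) x 0; rewrite !addr0 !scaleN1r => ->.
by rewrite lin0 // addr0.
Qed.

Lemma linZ (f : U -> U) : linear f -> forall (a : R) x, f (a *: x) = a *: f x.
Proof. by move=> hf a x; have := hf a x 0; rewrite !addr0 lin0 // addr0. Qed.

Variable ip : U -> U -> R.
Hypothesis hip : is_inner_product ip.

Lemma ipDl x y z : ip (x + y) z = ip x z + ip y z.
Proof. by case: hip. Qed.
Lemma ipZl (a : R) x y : ip (a *: x) y = a * ip x y.
Proof. by case: hip. Qed.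
Lemma ipNl x y : ip (- x) y = - ip x y.
Proof. by rewrite -scaleN1r ipZl mulN1r. Qed.
Lemma ipC x y : ip x y = ip y x.
Proof. by case: hip. Qed.
Lemma ipDr x y z : ip z (x + y) = ip z x + ip z y.
Proof. by rewrite ipC ipDl !(ipC z). Qed.
Lemma ipNr x y : ip y (- x) = - ip y x.
Proof. by rewrite ipC ipNl ipC. Qed.
Lemma ipZr (a : R) x y : ip y (a *: x) = a * ip y x.
Proof. by rewrite ipC ipZl ipC. Qed.

End Helpers.

Theorem corollary3p8 (R : realType) (U : completeNormedModType R)
  (ip : U -> U -> R) (H : U -> set U)
  (V' : nat -> U -> U) (M W Z Xi : nat -> U -> U)
  (u : nat -> U) (uh : U) (Uset : set U) (Delta : nat -> R) :
  is_inner_product ip ->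
  inv_set H 0 !=set0 ->
  (forall i, bounded_linear (M i.+1) /\ bounded_linear (W i.+1) /\
             bounded_linear (Z i.+1) /\ bounded_linear (Xi i.+1)) ->
  (forall i, self_adjoint ip (Z i.+1 \o M i.+1) /\
             op_ge ip (Z i.+1 \o M i.+1) (fun _ => 0)) ->
  (forall i, exists2 h, H (u i.+1) h &
      W i.+1 h + V' i.+1 (u i.+1) + M i.+1 (u i.+1 - u i) = 0) ->
  inv_set H 0 uh ->
  (forall i, psub_at ip H (Z i.+1 \o Xi i.+1) (fun x => 2 *: Z i.+1 (W i.+1 x))
                (Z i.+2 \o M i.+2) uh 0 Uset) ->
  (forall i us, inv_set H 0 us ->
     2^-1 * sqnormT ip (Z i.+1 \o M i.+1) (u i.+1 - u i)
     + 2^-1 * sqnormT ip (fun x => Z i.+1 (M i.+1 x + Xi i.+1 x) - Z i.+2 (M i.+2 x))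
                (u i.+1 - us)
     + ipT ip (Z i.+1) (V' i.+1 (u i.+1)) (u i.+1 - us) >= - Delta i.+1) ->
  forall N : nat, (1 <= N)%N -> (forall k, (k <= N)%N -> Uset (u k)) ->
    ((2^-1)%:E * sqdistT ip (Z N.+1 \o M N.+1) (u N) (inv_set H (0%R : U))
     <= (2^-1)%:E * sqdistT ip (Z 1%N \o M 1%N) (u 0%N) (inv_set H (0%R : U))
        + (\sum_(0 <= i < N) Delta i.+1)%R%:E)%E.
Proof.
move=> hip hne hlin hsa heq huh hps hD N hN hU.
set S := inv_set H 0.
pose D k := sqdistT ip (Z k.+1 \o M k.+1) (u k) S.
have step : forall k, (k < N)%N -> (D k.+1 <= D k + (2 * Delta k.+1)%:E)%E.
  move=> k hk.
  rewrite /D /sqdistT.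
  apply: inf_step => us Sus.
  have [h Hh Eh] := heq k.
  have [_ _ _ hp] := hps k.
  have := hp (u k.+1) h (hU _ hk) Hh.
  move=> /le_trans; apply.
  apply: le_trans (ereal_inf_lbound _) _; first by exists us.
  rewrite lee_fin /ipT /sqnormT /=.
  have hDk := hD k us Sus.
  have [[hM _] [[hW _] [[hZ _] [hX _]]]] := hlin k.
  have [hsa1 _] := hsa k.
  rewrite subr0.
  move/eqP: Eh; rewrite -addrA addr_eq0 opprD => /eqP Wh.
  rewrite Wh.
  move: hDk; rewrite /ipT /sqnormT /=.
  have Exy : u k.+1 - u k = (u k.+1 - us) - (u k - us) by rewrite opprB addrA subrK.
  rewrite Exy.
  set e := u k.+1 - us; set f := u k - us; clearbody e f.
  rewrite !(linZ _ hZ, linD _ hZ, linN _ hZ, linD _ hM, linN _ hM).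
  rewrite !(ipDl _ hip, ipNl _ hip, ipZl _ hip, ipDr _ hip, ipNr _ hip).
  have sa : ip (Z k.+1 (M k.+1 f)) e = ip (Z k.+1 (M k.+1 e)) f.
    by rewrite [RHS](hsa1 e f) (ipC _ hip).
  rewrite sa => hDk.
  lra.
have chain : forall k, (k <= N)%N ->
    (D k <= D 0%N + (2 * \sum_(0 <= i < k) Delta i.+1)%:E)%E.
  elim=> [|k IH] hk.
    by rewrite big_geq // mulr0 adde0.
  apply: le_trans (step k hk) _.
  rewrite big_nat_recr //= mulrDr EFinD addeA.
  apply: leeD2r; apply: IH; exact: ltnW.
have := chain N (leqnn N).
move=> /(lee_wpmul2l (x := (2^-1)%:E)).
rewrite lee_fin invr_ge0 ler0n => /(_ isT) h.
apply: le_trans h _.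
rewrite muleDr //; last exact: fin_num_adde_defl.
by rewrite -EFinM mulrA mulVf ?mul1r.
Qed.
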